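(* Let $\mathbb{A},\mathbb{B}$ be real square matrices of the same size such that $\mathbb{A}$ is symmetric positive definite and $\mathbb{A}\mathbb{B}$ is skew-symmetric. Then every eigenvalue of $\mathbb{A}+\mathbb{B}$ is either a positive real number or a non-real complex number with positive real part. In particular, $\mathbb{A}+\mathbb{B}$ is invertible. *)

(* Defs.v *)
From HB Require Import structures.
From mathcomp Require Import all_boot all_order all_algebra.
From mathcomp Require Import reals.
From mathcomp.real_closed Require Import complex.
Set Implicit Arguments. Unset Strict Implicit. Unset Printing Implicit Defensive.
Import Order.TTheory GRing.Theory Num.Theory.
Local Open Scope ring_scope.

Definition sym_posdef (R : realType) (n : nat) (A : 'M[R]_n) : Prop :=
  A^T = A /\ forall v : 'rV[R]_n, v != 0 -> 0 < (v *m A *m v^T) 0 0.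

Definition skew_sym (R : realType) (n : nat) (M : 'M[R]_n) : Prop :=
  M^T = - M.

Definition ceigenvalue (R : realType) (n : nat) (M : 'M[R]_n) (z : R[i]) : bool :=
  eigenvalue (map_mx (real_complex R) M) z.

(* Main.v *)
Require Import Defs.
From HB Require Import structures.
From mathcomp Require Import all_boot all_order all_algebra.
From mathcomp Require Import reals ring lra.
From mathcomp.real_closed Require Import complex.
Import Order.TTheory GRing.Theory Num.Theory.
Local Open Scope ring_scope.
Section S.
Variable R : realType.
Local Notation C := (R[i]).
Local Notation rc := (real_complex R).
Local Notation q v S := ((map_mx conjc v *m map_mx rc S *m v^T) 0 0).
Lemma tr11 (T : Type) (M : 'M[T]_1) : M 0 0 = M^T 0 0.
Proof. by rewrite mxE. Qed.
Lemma conj_rc m n (S : 'M[R]_(m, n)) : map_mx conjc (map_mx rc S) = map_mx rc S.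
Proof. by apply/matrixP => i j; rewrite !mxE conjc_real. Qed.

Lemma q_conj n (S : 'M[R]_n) (v : 'rV[C]_n) : conjc (q v S) = q v S^T.
Proof.
transitivity ((map_mx conjc (map_mx conjc v *m map_mx rc S *m v^T)) 0 0).
  by rewrite [RHS]mxE.
rewrite !map_mxM.
have -> : map_mx conjc (map_mx conjc v) = v.
  by apply/matrixP => i j; rewrite !mxE conjcK.
have -> : map_mx conjc (map_mx rc S) = map_mx rc S.
  by apply/matrixP => i j; rewrite !mxE conjc_real.
rewrite tr11 !trmx_mul -!map_trmx ?trmxK mulmxA.
by [].
Qed.
End S.
Section T.
Variable R : realType.
Local Notation C := (R[i]).
Local Notation rc := (real_complex R).
Local Notation q v S := ((map_mx conjc v *m map_mx rc S *m v^T) 0 0).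
Lemma q_pos n (S : 'M[R]_n) : S^T = S ->
  (forall u : 'rV[R]_n, u != 0 -> 0 < (u *m S *m u^T) 0 0) ->
  forall v : 'rV[C]_n, v != 0 -> exists2 r, 0 < r & q v S = rc r.
Proof.
move=> sS pS v v0.
have ge (u : 'rV[R]_n) : 0 <= (u *m S *m u^T) 0 0.
  have [->|u0] := eqVneq u 0; last exact: ltW (pS _ u0).
  by rewrite !mul0mx mxE.
pose a := map_mx (@complex.Re R) v; pose b := map_mx (@complex.Im R) v.
have hv : v = map_mx rc a + 'i%C *: map_mx rc b.
  by apply/matrixP => i j; rewrite !mxE; exact: complexE.
have hvc : map_mx conjc v = map_mx rc a - 'i%C *: map_mx rc b.
  apply/matrixP => i j; rewrite !mxE; case: (v i j) => x y /=.
  by apply/eqP; rewrite eq_complex /=; apply/andP; split; apply/eqP; ring.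
have ab : (a != 0) || (b != 0).
  apply: contraTT v0; rewrite negb_or !negbK => /andP[/eqP a0 /eqP b0].
  by rewrite hv a0 b0 !map_mx0 scaler0 addr0.
exists ((a *m S *m a^T) 0 0 + (b *m S *m b^T) 0 0).
  have := ge a; have := ge b.
  by case/orP: ab => [/pS|/pS] h; lra.
have e1 (x y : 'rV[R]_n) : (map_mx rc x *m map_mx rc S *m (map_mx rc y)^T) = map_mx rc (x *m S *m y^T).
  by rewrite map_trmx -!map_mxM.
have e2 : (b *m S *m a^T) 0 0 = (a *m S *m b^T) 0 0.
  by rewrite tr11 !trmx_mul trmxK sS mulmxA.
rewrite hvc [in X in X^T]hv linearD /=.
rewrite !mulmxDl !mulmxDr !mulNmx -!scalemxAl.
rewrite !linearZ /= !e1.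
set p := (a *m S *m a^T); set r := (a *m S *m b^T); set s := (b *m S *m b^T).
set t := (b *m S *m a^T).
rewrite !mxE in e2.
rewrite !mxE /t e2.
move: (\sum_j _) (\sum_j _) (\sum_j _) => x1 x2 x3.
apply/eqP; rewrite eq_complex /=.
by apply/andP; split; apply/eqP; ring.
Qed.
End T.
Section K.
Variable R : realType.
Local Notation C := (R[i]).
Local Notation rc := (real_complex R).
Local Notation q v S := ((map_mx conjc v *m map_mx rc S *m v^T) 0 0).

Lemma id_pos n (u : 'rV[R]_n) : u != 0 -> 0 < (u *m 1%:M *m u^T) 0 0.
Proof.
move=> u0; rewrite mulmx1 mxE.
have [j hj] : exists j, u 0 j != 0.
  apply/existsP; apply: contraNT u0; rewrite negb_exists => /forallP h.
  by apply/eqP/rowP => j; rewrite mxE; apply/eqP; have := h j; rewrite negbK.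
rewrite (bigD1 j) //= mxE.
have h1 : 0 < u 0 j * u 0 j.
  by rewrite neq_lt in hj; case/orP: hj => h; nra.
have h2 : 0 <= \sum_(i < n | i != j) u 0 i * u^T i 0.
  by apply: sumr_ge0 => i _; rewrite mxE; nra.
lra.
Qed.

Lemma key n (A B : 'M[R]_n) : sym_posdef A -> skew_sym (A *m B) ->
  forall (z : C) (v : 'rV[C]_n), v != 0 ->
  v *m (map_mx rc (A + B))^T = z *: v -> 0 < complex.Re z.
Proof.
case=> sA pA sk z v v0 ev.
have ev' : map_mx rc (A + B) *m v^T = z *: v^T.
  by rewrite -[LHS]trmxK trmx_mul trmxK ev linearZ.
have E : q v (A *m (A + B)) = z * q v A.
  rewrite map_mxM -!mulmxA ev'.
  by rewrite -!scalemxAr mxE mulmxA.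
have E2 : q v (A *m (A + B)) = q v (A *m A) + q v (A *m B).
  by rewrite mulmxDr map_mxD mulmxDr mulmxDl mxE.
have E3 : complex.Re (q v (A *m B)) = 0.
  have h : conjc (q v (A *m B)) = - q v (A *m B).
    by rewrite q_conj sk map_mxN mulmxN mulNmx [LHS]mxE.
  move: h; case: (q v (A *m B)) => x y /(congr1 (@complex.Re R)) /= h; lra.
have [r r0 Er] := @q_pos _ _ _ sA pA _ v0.
pose u := v *m map_mx rc A.
have AvT : map_mx rc A *m v^T = u^T by rewrite /u trmx_mul map_trmx sA.
have Eu : q v (A *m A) = q u 1%:M.
  rewrite [in RHS]/u !map_mxM conj_rc map_mx1 mulmx1 -AvT.
  by rewrite !mulmxA.
have u0 : u != 0.
  apply/negP => /eqP u0.
  have : rc r = 0 by rewrite -Er -mulmxA AvT u0 trmx0 mulmx0 mxE.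
  by move=> /(congr1 (@complex.Re R)) /= h0; rewrite h0 ltxx in r0.
have [s s0 Es] := @q_pos _ _ _ (tr_scalar_mx _ _) (@id_pos n) _ u0.
move: E; rewrite E2 Er Eu Es; case: z {ev ev'} => a b; case: (q v (A *m B)) E3 => x y /= ->.
move=> [] h _.
rewrite mulr0 subr0 addr0 in h.
by rewrite -(pmulr_lgt0 _ r0) -h.
Qed.
End K.

Lemma char_poly_tr (F : fieldType) n (M : 'M[F]_n) : char_poly M^T = char_poly M.
Proof.
rewrite /char_poly -[RHS]det_tr; apply: f_equal.
by rewrite /char_poly_mx linearB /= tr_scalar_mx map_trmx.
Qed.

Theorem lemma4p1 (R : realType) (n : nat) (A B : 'M[R]_n) :
  sym_posdef A -> skew_sym (A *m B) ->
  (forall z : R[i], ceigenvalue (A + B) z ->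
     (complex.Im z = 0 /\ 0 < complex.Re z) \/
     (complex.Im z != 0 /\ 0 < complex.Re z)) /\
  (A + B) \in unitmx.
Proof.
move=> hA hB.
have K := @key _ _ _ _ hA hB.
split.
  move=> z hz.
  have hz' : eigenvalue (map_mx (real_complex R) (A + B))^T z.
    by move: hz; rewrite /ceigenvalue !eigenvalue_root_char char_poly_tr.
  case/eigenvalueP: hz' => v ev v0.
  have pos := K z v v0 ev.
  by case: (eqVneq (complex.Im z) 0) => [->|nz]; [left|right].
rewrite -unitmx_tr unitmxE unitfE; apply/negP => /det0P [v v0 hv].
have w0 : map_mx (real_complex R) v != 0 by rewrite map_mx_eq0.
have := K 0 _ w0.
rewrite map_trmx -map_mxM hv map_mx0 scale0r => /(_ erefl).
by rewrite ltxx.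
Qed.
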